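(* Consider the ample-reserves (lending constraint slack) equilibrium conditions with nominal rate $i>0$. If the interest on reserves is set to $i_r=i+\gamma'(\underline r)$, where $\underline r>0$ solves $\gamma'(\underline r)\underline r-\gamma(\underline r)=k$, then consumption in type-2 meetings is efficient: $q_2=q^*$.
   Context: DM preferences: $u,c$ with $u'>0,u''<0$, $c'>0,c''\ge0$, $u(0)=c(0)=0$, $q^*$ solves $u'(q^* )=c'(q^* )$; with buyer bargaining power $\theta\in(0,1]$, the liquidity premium is $\lambda(q)=\theta[u'(q)-c'(q)]/[(1-\theta)u'(q)+\theta c'(q)]$ for $q<q^*$, $\lambda(q^* )=0$, strictly decreasing on $[0,q^* )$. A type-2 buyer (who can pay with cash, deposits and bank notes, but not unsecured credit) consumes $q_2$ with $\lambda(q_2)=i_\ell$ when borrowing from banks. Bank cost functions $\gamma,\eta:[0,\infty)\to[0,\infty)$ twice differentiable with $\gamma',\gamma''>0$, $\eta',\eta''>0$ on $(0,\infty)$, $\gamma(0)=\gamma'(0)=\eta(0)=\eta'(0)=0$; entry cost $k>0$. In the ample-reserves equilibrium the bank's reserves $\tilde r$ and loans $\tilde\ell\ge0$ satisfy $i_d=i_r-\gamma'(\tilde r)$, $i_\ell=\eta'(\tilde\ell)$, $1+i=(1+i_d)(1+i_\ell)$, and $\gamma'(\tilde r)\tilde r-\gamma(\tilde r)+\eta'(\tilde\ell)\tilde\ell-\eta(\tilde\ell)=k$. *)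

(* Defs.v *)
From Stdlib Require Import Reals.
From Coquelicot Require Import Coquelicot.
Open Scope R_scope.

(* Liquidity premium lambda(q) with buyer bargaining power theta;
   u1, c1 are the derivatives u', c'.  lambda(q) given by the formula for q < qstar,
   and 0 at qstar (only evaluated on (0, qstar]). *)
Definition liq_premium (theta : R) (u1 c1 : R -> R) (qstar q : R) : R :=
  if Rlt_dec q qstar then
    theta * (u1 q - c1 q) / ((1 - theta) * u1 q + theta * c1 q)
  else 0.

Definition right_deriv0 (f : R -> R) (d : R) : Prop :=
  filterlim (fun h => (f h - f 0) / h) (at_right 0) (locally d).

(* Main.v *)
Require Import Defs.
From Stdlib Require Import Reals Lra Psatz.
From Coquelicot Require Import Coquelicot.
Open Scope R_scope.

Lemma mvt_pos (f df : R -> R) a b : 0 < a -> a < b ->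
  (forall x, 0 < x -> is_derive f x (df x)) ->
  exists c, a <= c <= b /\ f b - f a = df c * (b - a).
Proof.
  intros Ha Hab Hd.
  destruct (MVT_gen f a b df) as [c [Hc E]].
  - intros x Hx. apply Hd. rewrite Rmin_left in Hx; lra.
  - intros x Hx. apply continuity_pt_filterlim. apply (@ex_derive_continuous R_AbsRing R_NormedModule).
    eexists. apply Hd. rewrite Rmin_left in Hx; lra.
  - exists c. rewrite Rmin_left, Rmax_right in Hc; try lra. 
Qed.

Lemma incr_lt (f df : R -> R) a b : 0 < a -> a < b ->
  (forall x, 0 < x -> is_derive f x (df x)) -> (forall x, 0 < x -> 0 < df x) -> f a < f b.
Proof.
  intros Ha Hab Hd Hp. destruct (mvt_pos f df a b Ha Hab Hd) as [c [Hc E]].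
  assert (0 < df c) by (apply Hp; lra). nra.
Qed.

Lemma incr_le (f df : R -> R) a b : 0 < a -> a <= b ->
  (forall x, 0 < x -> is_derive f x (df x)) -> (forall x, 0 < x -> 0 <= df x) -> f a <= f b.
Proof.
  intros Ha Hab Hd Hp. destruct (Req_dec a b) as [->|Hne]; [lra|].
  destruct (mvt_pos f df a b Ha ltac:(lra) Hd) as [c [Hc E]].
  assert (0 <= df c) by (apply Hp; lra). nra.
Qed.

Lemma small_bound (f : R -> R) : f 0 = 0 -> right_deriv0 f 0 ->
  exists d, 0 < d /\ forall y, 0 < y < d -> Rabs (f y) < y.
Proof.
  intros H0 Hr. unfold right_deriv0 in Hr.
  assert (Hb := Hr (fun z => Rabs (z - 0) < 1)).
  destruct (Hb) as [d Hd].
  { exists (mkposreal 1 Rlt_0_1). intros z Hz. exact Hz. }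
  exists d. split; [apply cond_pos|]. intros y Hy.
  assert (Hy' : ball 0 d y).
  { unfold ball; simpl; unfold AbsRing_ball, abs, minus, plus, opp; simpl.
    rewrite Rabs_right; lra. }
  specialize (Hd y Hy' ltac:(lra)). simpl in Hd.
  rewrite H0, Rminus_0_r, Rminus_0_r in Hd.
  unfold Rdiv in Hd. rewrite Rabs_mult, Rabs_inv, (Rabs_right y) in Hd by lra.
  apply Rmult_lt_reg_r with (/ y). apply Rinv_0_lt_compat; lra.
  rewrite Rinv_r by lra. exact Hd.
Qed.
Theorem proposition3
  (* DM preferences: u, c with derivatives u1, c1 and second derivatives u2, c2 *)
  (u u1 u2 c c1 c2 : R -> R) (qstar theta : R)
  (Hu1 : forall q, 0 < q -> is_derive u q (u1 q))
  (Hu2 : forall q, 0 < q -> is_derive u1 q (u2 q))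
  (Hc1 : forall q, 0 < q -> is_derive c q (c1 q))
  (Hc2 : forall q, 0 < q -> is_derive c1 q (c2 q))
  (Hu1pos : forall q, 0 < q -> 0 < u1 q)
  (Hu2neg : forall q, 0 < q -> u2 q < 0)
  (Hc1pos : forall q, 0 < q -> 0 < c1 q)
  (Hc2nn : forall q, 0 < q -> 0 <= c2 q)
  (Hu0 : u 0 = 0) (Hc0 : c 0 = 0)
  (Hqstar : 0 < qstar) (Hqstar_eq : u1 qstar = c1 qstar)
  (Htheta : 0 < theta <= 1)
  (* bank cost functions gamma, eta, twice differentiable on [0,oo) *)
  (gam gam1 gam2 eta eta1 eta2 : R -> R) (k : R)
  (Hg1 : forall x, 0 < x -> is_derive gam x (gam1 x))
  (Hg2 : forall x, 0 < x -> is_derive gam1 x (gam2 x))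
  (Hg1_0 : right_deriv0 gam (gam1 0))
  (Hg2_0 : right_deriv0 gam1 (gam2 0))
  (Hg1pos : forall x, 0 < x -> 0 < gam1 x)
  (Hg2pos : forall x, 0 < x -> 0 < gam2 x)
  (Hg0 : gam 0 = 0) (Hg10 : gam1 0 = 0)
  (He1 : forall x, 0 < x -> is_derive eta x (eta1 x))
  (He2 : forall x, 0 < x -> is_derive eta1 x (eta2 x))
  (He1_0 : right_deriv0 eta (eta1 0))
  (He2_0 : right_deriv0 eta1 (eta2 0))
  (He1pos : forall x, 0 < x -> 0 < eta1 x)
  (He2pos : forall x, 0 < x -> 0 < eta2 x)
  (He0 : eta 0 = 0) (He10 : eta1 0 = 0)
  (Hk : 0 < k)
  (* policy: nominal rate i > 0, interest on reserves i_r = i + gamma'(rbar) *)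
  (i i_r i_d i_l : R) (rbar : R)
  (Hi : 0 < i)
  (Hrbar : 0 < rbar) (Hrbar_eq : gam1 rbar * rbar - gam rbar = k)
  (Hir : i_r = i + gam1 rbar)
  (* ample-reserves equilibrium conditions *)
  (rt lt q2 : R)
  (Hrt : 0 <= rt) (Hlt : 0 <= lt)
  (Hid : i_d = i_r - gam1 rt)
  (Hil : i_l = eta1 lt)
  (Hfisher : 1 + i = (1 + i_d) * (1 + i_l))
  (Hentry : gam1 rt * rt - gam rt + (eta1 lt * lt - eta lt) = k)
  (* type-2 consumption when borrowing from banks *)
  (Hq2 : 0 < q2 <= qstar)
  (Hlam : liq_premium theta u1 c1 qstar q2 = i_l) :
  q2 = qstar.
Proof.
  assert (Hg : 0 <= eta1 lt * lt - eta lt).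
  { destruct (Req_dec lt 0) as [->|Hne]; [rewrite He0; lra|].
    assert (Hltp : 0 < lt) by lra.
    destruct (small_bound eta He0 ltac:(rewrite <- He10; exact He1_0)) as [d [Hd Hb]].
    assert (He : forall e, 0 < e -> eta lt <= eta1 lt * lt + e).
    { intros e He.
      set (y := Rmin (Rmin (d/2) (lt/2)) (e/2)).
      assert (Hy1 : y <= d/2) by (unfold y; repeat (apply Rmin_glb_lt || idtac);
        eapply Rle_trans; [apply Rmin_l|apply Rmin_l]).
      assert (Hy2 : y <= lt/2) by (unfold y; eapply Rle_trans; [apply Rmin_l|apply Rmin_r]).
      assert (Hy3 : y <= e/2) by (unfold y; apply Rmin_r).
      assert (Hy0 : 0 < y) by (unfold y; repeat apply Rmin_pos; lra).
      destruct (mvt_pos eta eta1 y lt Hy0 ltac:(lra) He1) as [cc [Hc E]].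
      assert (eta1 cc <= eta1 lt) by
        (apply (incr_le eta1 eta2 cc lt); try lra; intros; [apply He2; lra| left; apply He2pos; lra]).
      assert (0 < eta1 lt) by (apply He1pos; lra).
      assert (0 < eta1 cc) by (apply He1pos; lra).
      specialize (Hb y ltac:(lra)). apply Rabs_def2 in Hb.
      nra. }
    destruct (Rle_dec (eta lt) (eta1 lt * lt)) as [|Hn]; [lra|].
    specialize (He ((eta lt - eta1 lt * lt)/2) ltac:(lra)). lra. }
  assert (Hrle : rt <= rbar).
  { destruct (Rle_dec rt rbar) as [|Hn]; [assumption|exfalso].
    destruct (mvt_pos gam gam1 rbar rt Hrbar ltac:(lra) Hg1) as [cc [Hc E]].
    assert (gam1 cc <= gam1 rt) by
      (apply (incr_le gam1 gam2 cc rt); try lra; intros; [apply Hg2; lra| left; apply Hg2pos; lra]).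
    assert (gam1 rbar < gam1 rt) by
      (apply (incr_lt gam1 gam2); try lra; intros; [apply Hg2; lra| apply Hg2pos; lra]).
    nra. }
  assert (Hgle : gam1 rt <= gam1 rbar).
  { destruct (Req_dec rt 0) as [->|Hne]; [rewrite Hg10; left; apply Hg1pos; lra|].
    apply (incr_le gam1 gam2); try lra; intros; [apply Hg2; lra| left; apply Hg2pos; lra]. }
  assert (Hil0 : 0 <= i_l).
  { rewrite Hil. destruct (Req_dec lt 0) as [->|Hne]; [rewrite He10; lra|].
    left; apply He1pos; lra. }
  assert (Hil1 : i_l = 0) by nra.
  destruct (Req_dec q2 qstar) as [|Hne]; [assumption|exfalso].
  assert (Hq : q2 < qstar) by lra.
  unfold liq_premium in Hlam. destruct (Rlt_dec q2 qstar) as [_|]; [|lra].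
  destruct (mvt_pos u1 u2 q2 qstar ltac:(lra) Hq Hu2) as [cc [Hc E]].
  assert (u2 cc < 0) by (apply Hu2neg; lra).
  assert (c1 q2 <= c1 qstar) by
    (apply (incr_le c1 c2); try lra; intros; [apply Hc2; lra| apply Hc2nn; lra]).
  assert (0 < u1 q2) by (apply Hu1pos; lra).
  assert (0 < c1 q2) by (apply Hc1pos; lra).
  assert (Hden : 0 < (1 - theta) * u1 q2 + theta * c1 q2) by nra.
  assert (u2 cc * (qstar - q2) < 0) by (apply Rmult_neg_pos; lra).
  assert (Hnum : 0 < theta * (u1 q2 - c1 q2)) by (apply Rmult_lt_0_compat; lra).
  assert (0 < theta * (u1 q2 - c1 q2) / ((1 - theta) * u1 q2 + theta * c1 q2)).
  { apply Rdiv_lt_0_compat; assumption. }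
  lra.
Qed.
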